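(* Let $f:\mathbb{R}^n\times\mathbb{R}^m\to\mathbb{R}^n$ be a polynomial map and let $\boldsymbol\psi:\mathbb{R}^n\to\mathbb{R}^m$ be a function whose graph satisfies \[ \{(x,\boldsymbol\psi(x)) : x\in\mathbb{R}^n\} = \{(x,u) \mid \exists\,\lambda\in\mathbb{R}^{n_\lambda}\ \text{s.t.}\ g(x,u,\lambda)\ge 0,\ h(x,u,\lambda)=0\} \] for vector-valued polynomial maps $g,h$. Write $\xi=(x,u,\lambda,x^+,u^+,\lambda^+)$. Suppose there exist a polynomial $V(x,u,\lambda)$, (vectors of) sum-of-squares polynomials $\sigma_0(\xi),\sigma_1(\xi),\sigma_2(\xi),\bar\sigma_0(x,u,\lambda),\bar\sigma_1(x,u,\lambda)$ and (vectors of) arbitrary polynomials $p_1(\xi),p_2(\xi),p_3(\xi),\bar p_1(x,u,\lambda)$ of compatible dimensions such that the polynomial identities \[ V(x,u,\lambda) - V(x^+,u^+,\lambda^+) - \|x\|_2^2 = \sigma_0(\xi) + \sigma_1(\xi)^\top g(x,u,\lambda) + \sigma_2(\xi)^\top g(x^+,u^+,\lambda^+) + p_1(\xi)^\top h(x,u,\lambda) + p_2(\xi)^\top h(x^+,u^+,\lambda^+) + p_3(\xi)^\top(x^+ - f(x,u)), \] \[ V(x,u,\lambda) = \bar\sigma_0(x,u,\lambda) + \bar\sigma_1(x,u,\lambda)^\top g(x,u,\lambda) + \bar p_1(x,u,\lambda)^\top h(x,u,\lambda) \] hold. Then: (1) the closed-loop system $x_{k+1}=f(x_k,\boldsymbol\psi(x_k))$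 is globally attractive, i.e., $x_k\to0$ for all initial conditions; (2) if in addition the function $x\mapsto\inf\{\|u\|_2+\|\lambda\|_2\mid g(x,u,\lambda)\ge0,\ h(x,u,\lambda)=0\}$ is bounded on some neighborhood of the origin, or $V$ does not depend on $(u,\lambda)$, then the closed-loop system is globally asymptotically stable.
   Context: A polynomial is sum-of-squares (SOS) if it is a finite sum of squares of polynomials; a vector of SOS polynomials has SOS entries. The closed-loop system is globally asymptotically stable if (i) for all initial conditions $x_0$, $\lim_{k\to\infty}x_k=0$, and (ii) for every $\epsilon>0$ there exists $\delta>0$ such that $\|x_0\|_2\le\delta$ implies $\|x_k\|_2\le\epsilon$ for all $k$. *)

(* Defs.v *)
From HB Require Import structures.
From Stdlib Require Lists.List.
From mathcomp Require Import all_boot all_order all_algebra.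
From mathcomp Require Import all_classical all_reals all_analysis.
Set Implicit Arguments. Unset Strict Implicit. Unset Printing Implicit Defensive.
Import Order.TTheory GRing.Theory Num.Theory.
Import numFieldNormedType.Exports.
Local Open Scope classical_set_scope.
Local Open Scope ring_scope.

(* Polynomial functions in real variables indexed by a type I:
   points are valuations I -> R; polynomials are generated by constants,
   coordinate variables, sums and products. Over an infinite field, a
   polynomial identity is the same as equality of the associated functions. *)
Inductive polyfun {R : pzRingType} {I : Type} : ((I -> R) -> R) -> Prop :=
| pf_const (c : R) : polyfun (fun _ => c)
| pf_var (i : I) : polyfun (fun z => z i)
| pf_add p q : polyfun p -> polyfun q -> polyfun (fun z => p z + q z)
| pf_mul p q : polyfun p -> polyfun q -> polyfun (fun z => p z * q z).

Definition sos {R : pzRingType} {I : Type} (p : (I -> R) -> R) : Prop :=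
  exists s : seq ((I -> R) -> R),
    (forall q, Stdlib.Lists.List.In q s -> polyfun q) /\
    (forall z, p z = \sum_(q <- s) (q z) ^+ 2).

Definition xu_var (n m : nat) := ('I_n + 'I_m)%type.
Definition xul_var (n m l : nat) := ('I_n + 'I_m + 'I_l)%type.
Definition xi_var (n m l : nat) := (xul_var n m l + xul_var n m l)%type.

Definition pt_xu {R : Type} {n m : nat} (x : 'I_n -> R) (u : 'I_m -> R)
  : xu_var n m -> R :=
  fun v => match v with inl i => x i | inr j => u j end.

Definition pt_xul {R : Type} {n m l : nat} (x : 'I_n -> R) (u : 'I_m -> R)
  (lam : 'I_l -> R) : xul_var n m l -> R :=
  fun v => match v with
           | inl (inl i) => x i | inl (inr j) => u j | inr k => lam k end.

Definition pt_xi {R : Type} {n m l : nat} (a b : xul_var n m l -> R)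
  : xi_var n m l -> R :=
  fun v => match v with inl w => a w | inr w => b w end.

Definition sqnorm2 {R : pzRingType} {n : nat} (x : 'I_n -> R) : R :=
  \sum_(i < n) x i ^+ 2.
Definition norm2 {R : rcfType} {n : nat} (x : 'I_n -> R) : R :=
  Num.sqrt (sqnorm2 x).

Fixpoint traj {R : Type} {n m : nat} (f : 'I_n -> (xu_var n m -> R) -> R)
  (psi : ('I_n -> R) -> ('I_m -> R)) (x0 : 'I_n -> R) (k : nat) : 'I_n -> R :=
  match k with
  | 0 => x0
  | k'.+1 => let xk := traj f psi x0 k' in fun i => f i (pt_xu xk (psi xk))
  end.

Definition glob_attractive {R : realType} {n m : nat}
  (f : 'I_n -> (xu_var n m -> R) -> R) (psi : ('I_n -> R) -> ('I_m -> R)) : Prop :=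
  forall x0 : 'I_n -> R, norm2 (traj f psi x0 k) @[k --> \oo] --> (0 : R).

Definition GAS {R : realType} {n m : nat}
  (f : 'I_n -> (xu_var n m -> R) -> R) (psi : ('I_n -> R) -> ('I_m -> R)) : Prop :=
  glob_attractive f psi /\
  (forall eps : R, 0 < eps -> exists delta : R, 0 < delta /\
     forall x0 : 'I_n -> R, norm2 x0 <= delta ->
       forall k, norm2 (traj f psi x0 k) <= eps).

(* Main.v *)
Require Import Defs.
From HB Require Import structures.
From mathcomp Require Import all_boot all_order all_algebra.
From mathcomp Require Import all_classical all_reals all_analysis.
From mathcomp Require Import ring lra.
Import Order.TTheory GRing.Theory Num.Theory.
Local Open Scope ring_scope.
Local Open Scope classical_set_scope.

Lemma pf_bound {R : realType} (I : Type) (p : (I -> R) -> R) :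
  polyfun p -> forall B : R, 0 <= B -> exists K C : R, 0 <= K /\ 0 <= C /\
   (forall z, (forall v, `|z v| <= B) -> `|p z| <= K) /\
   (forall z w d, (forall v, `|z v| <= B) -> (forall v, `|w v| <= B) ->
       (forall v, `|z v - w v| <= d) -> `|p z - p w| <= C * d).
Proof.
move=> Hp B B0; elim: Hp.
- move=> c; exists `|c|, 0; do !split => //.
  by move=> z w d _ _ _; rewrite subrr normr0 mul0r.
- move=> i; exists B, 1; do !split => //.
  by move=> z w d _ _ /(_ i); rewrite mul1r.
- move=> p0 q0 _ [K1 [C1 [K10 [C10 [HK1 HC1]]]]] _ [K2 [C2 [K20 [C20 [HK2 HC2]]]]].
  exists (K1 + K2), (C1 + C2); do !split; first exact: addr_ge0.
  + exact: addr_ge0.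
  + by move=> z Hz; apply: le_trans (ler_normD _ _) _; apply: lerD; auto.
  + move=> z w d Hz Hw Hd.
    have -> : p0 z + q0 z - (p0 w + q0 w) = (p0 z - p0 w) + (q0 z - q0 w) by ring.
    apply: le_trans (ler_normD _ _) _; rewrite mulrDl; apply: lerD; auto.
- move=> p0 q0 _ [K1 [C1 [K10 [C10 [HK1 HC1]]]]] _ [K2 [C2 [K20 [C20 [HK2 HC2]]]]].
  exists (K1 * K2), (K1 * C2 + C1 * K2); do !split; first exact: mulr_ge0.
  + by apply: addr_ge0; apply: mulr_ge0.
  + by move=> z Hz; rewrite normrM; apply: ler_pM; auto.
  + move=> z w d Hz Hw Hd.
    have -> : p0 z * q0 z - p0 w * q0 w = p0 z * (q0 z - q0 w) + (p0 z - p0 w) * q0 w by ring.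
    apply: le_trans (ler_normD _ _) _; rewrite !normrM mulrDl; apply: lerD.
    * by rewrite -mulrA; apply: ler_pM; auto.
    * by rewrite mulrAC; apply: ler_pM; auto.
Qed.

Lemma sos_ge0 {R : realType} (I : Type) (p : (I -> R) -> R) z : sos p -> 0 <= p z.
Proof. by case=> s [_ ->]; apply: sumr_ge0 => q _; apply: sqr_ge0. Qed.

Lemma sqnorm2_ge0 {R : realType} {n} (x : 'I_n -> R) : 0 <= sqnorm2 x.
Proof. by apply: sumr_ge0 => i _; apply: sqr_ge0. Qed.

Lemma norm2_ge0 {R : realType} {n} (x : 'I_n -> R) : 0 <= norm2 x.
Proof. exact: sqrtr_ge0. Qed.

Lemma coord_le_sqnorm2 {R : realType} {n} (x : 'I_n -> R) i : x i ^+ 2 <= sqnorm2 x.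
Proof.
rewrite /sqnorm2 (bigD1 i) //= lerDl; apply: sumr_ge0 => j _; exact: sqr_ge0.
Qed.

Lemma coord_le_norm2 {R : realType} {n} (x : 'I_n -> R) i : `|x i| <= norm2 x.
Proof.
rewrite -sqrtr_sqr /norm2 ler_sqrt; first exact: coord_le_sqnorm2.
exact: sqnorm2_ge0.
Qed.

Lemma norm2_lt {R : realType} {n} (x : 'I_n -> R) e : 0 < e -> sqnorm2 x < e ^+ 2 -> norm2 x < e.
Proof.
move=> e0 H; rewrite /norm2 -(ger0_norm (ltW e0)) -sqrtr_sqr ltr_sqrt //.
exact: exprn_gt0.
Qed.

Lemma norm2_le {R : realType} {n} (x : 'I_n -> R) e : 0 <= e -> sqnorm2 x <= e ^+ 2 -> norm2 x <= e.
Proof.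
move=> e0 H; rewrite /norm2 -(ger0_norm e0) -sqrtr_sqr ler_sqrt //.
exact: sqr_ge0.
Qed.

Lemma sqnorm2_le0 {R : realType} {n} (x : 'I_n -> R) i : sqnorm2 x <= 0 -> x i = 0.
Proof.
move=> H; have := le_trans (coord_le_sqnorm2 x i) H.
move=> H2; have H3 : x i ^+ 2 = 0 by apply/eqP; rewrite eq_le H2 sqr_ge0.
by move/eqP: H3; rewrite sqrf_eq0 => /eqP.
Qed.
Theorem theorem2 (R : realType) (n m nl ng nh : nat)
  (f : 'I_n -> (xu_var n m -> R) -> R)
  (psi : ('I_n -> R) -> ('I_m -> R))
  (g : 'I_ng -> (xul_var n m nl -> R) -> R)
  (h : 'I_nh -> (xul_var n m nl -> R) -> R)
  (V : (xul_var n m nl -> R) -> R)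
  (sigma0 : (xi_var n m nl -> R) -> R)
  (sigma1 sigma2 : 'I_ng -> (xi_var n m nl -> R) -> R)
  (p1 p2 : 'I_nh -> (xi_var n m nl -> R) -> R)
  (p3 : 'I_n -> (xi_var n m nl -> R) -> R)
  (sb0 : (xul_var n m nl -> R) -> R)
  (sb1 : 'I_ng -> (xul_var n m nl -> R) -> R)
  (pb1 : 'I_nh -> (xul_var n m nl -> R) -> R)
  (Hf : forall i, polyfun (f i))
  (Hg : forall i, polyfun (g i))
  (Hh : forall j, polyfun (h j))
  (Hgraph : forall (x : 'I_n -> R) (u : 'I_m -> R),
      u = psi x <->
      exists lam : 'I_nl -> R,
        (forall i, 0 <= g i (pt_xul x u lam)) /\
        (forall j, h j (pt_xul x u lam) = 0))
  (HV : polyfun V)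
  (Hs0 : sos sigma0) (Hs1 : forall i, sos (sigma1 i)) (Hs2 : forall i, sos (sigma2 i))
  (Hp1 : forall j, polyfun (p1 j)) (Hp2 : forall j, polyfun (p2 j))
  (Hp3 : forall i, polyfun (p3 i))
  (Hsb0 : sos sb0) (Hsb1 : forall i, sos (sb1 i)) (Hpb1 : forall j, polyfun (pb1 j))
  (Hid1 : forall (x : 'I_n -> R) (u : 'I_m -> R) (lam : 'I_nl -> R)
                 (xp : 'I_n -> R) (up : 'I_m -> R) (lamp : 'I_nl -> R),
      let z := pt_xul x u lam in
      let zp := pt_xul xp up lamp in
      let xi := pt_xi z zp in
      V z - V zp - sqnorm2 x =
        sigma0 xi
        + \sum_(i < ng) sigma1 i xi * g i z
        + \sum_(i < ng) sigma2 i xi * g i zp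
        + \sum_(j < nh) p1 j xi * h j z
        + \sum_(j < nh) p2 j xi * h j zp
        + \sum_(i < n) p3 i xi * (xp i - f i (pt_xu x u)))
  (Hid2 : forall (x : 'I_n -> R) (u : 'I_m -> R) (lam : 'I_nl -> R),
      let z := pt_xul x u lam in
      V z = sb0 z + \sum_(i < ng) sb1 i z * g i z + \sum_(j < nh) pb1 j z * h j z) :
  glob_attractive f psi /\
  ((exists r : R, 0 < r /\ exists M : R, forall x : 'I_n -> R, norm2 x < r ->
       `| inf [set t : R | exists (u : 'I_m -> R) (lam : 'I_nl -> R),
               (forall i, 0 <= g i (pt_xul x u lam)) /\
               (forall j, h j (pt_xul x u lam) = 0) /\
               t = norm2 u + norm2 lam] | <= M)
   \/
   (forall (x : 'I_n -> R) (u u' : 'I_m -> R) (lam lam' : 'I_nl -> R),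
       V (pt_xul x u lam) = V (pt_xul x u' lam'))
   -> GAS f psi).
Proof.
pose feas x u lam := (forall i, 0 <= g i (pt_xul x u lam)) /\ (forall j, h j (pt_xul x u lam) = 0).
pose nx (x : 'I_n -> R) : 'I_n -> R := fun i => f i (pt_xu x (psi x)).
have feas_psi : forall x u lam, feas x u lam -> u = psi x.
  by move=> x u lam H; apply/Hgraph; exists lam.
have ex_feas : forall x, exists lam, feas x (psi x) lam.
  by move=> x; apply/Hgraph.
have [lamc Hlamc] := choice ex_feas.
have key : forall x u lam xp up lamp, feas x u lam -> feas xp up lamp ->
   \sum_(i < n) p3 i (pt_xi (pt_xul x u lam) (pt_xul xp up lamp)) * (xp i - f i (pt_xu x u))
   <= V (pt_xul x u lam) - V (pt_xul xp up lamp) - sqnorm2 x.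
  move=> x u lam xp up lamp [Hg1 Hh1] [Hg2 Hh2].
  move: (Hid1 x u lam xp up lamp); cbv zeta => ->.
  have E1 : forall xi, \sum_(j < nh) p1 j xi * h j (pt_xul x u lam) = 0.
    by move=> xi; apply: big1 => j _; rewrite Hh1 mulr0.
  have E2 : forall xi, \sum_(j < nh) p2 j xi * h j (pt_xul xp up lamp) = 0.
    by move=> xi; apply: big1 => j _; rewrite Hh2 mulr0.
  rewrite E1 E2 !addr0 -[X in X <= _]add0r; apply: lerD; last exact: lexx.
  apply: addr_ge0; first apply: addr_ge0.
  - exact: sos_ge0.
  - by apply: sumr_ge0 => i _; apply: mulr_ge0; [exact: sos_ge0|exact: Hg1].
  - by apply: sumr_ge0 => i _; apply: mulr_ge0; [exact: sos_ge0|exact: Hg2].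
have step : forall x lam lam', feas x (psi x) lam -> feas (nx x) (psi (nx x)) lam' ->
    V (pt_xul (nx x) (psi (nx x)) lam') + sqnorm2 x <= V (pt_xul x (psi x) lam).
  move=> x lam lam' H1 H2; have := key _ _ _ _ _ _ H1 H2.
  rewrite big1; last by move=> i _; rewrite /nx subrr mulr0.
  move=> H; lra.
have Vpos : forall x u lam, feas x u lam -> 0 <= V (pt_xul x u lam).
  move=> x u lam [Hg1 Hh1]; move: (Hid2 x u lam); cbv zeta => ->.
  have E1 : \sum_(j < nh) pb1 j (pt_xul x u lam) * h j (pt_xul x u lam) = 0.
    by apply: big1 => j _; rewrite Hh1 mulr0.
  rewrite E1 addr0; apply: addr_ge0; first exact: sos_ge0.
  by apply: sumr_ge0 => i _; apply: mulr_ge0; [exact: sos_ge0|exact: Hg1].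
have dec : forall x0 lam0 k lam', feas x0 (psi x0) lam0 ->
    feas (traj f psi x0 k.+1) (psi (traj f psi x0 k.+1)) lam' ->
    sqnorm2 (traj f psi x0 k) + V (pt_xul (traj f psi x0 k.+1) (psi (traj f psi x0 k.+1)) lam')
      <= V (pt_xul x0 (psi x0) lam0).
  move=> x0 lam0 k; elim: k => [|k IH] lam' H0 H1.
    have := step _ _ _ H0 H1; rewrite /=; lra.
  have := step _ _ lam' (Hlamc (traj f psi x0 k.+1)) H1.
  have := IH _ H0 (Hlamc _).
  have := sqnorm2_ge0 (traj f psi x0 k).
  rewrite /=; lra.
have attr : glob_attractive f psi.
  move=> x0; pose a k := V (pt_xul (traj f psi x0 k) (psi (traj f psi x0 k)) (lamc (traj f psi x0 k))).
  have a_ge0 : forall k, 0 <= a k by move=> k; apply: Vpos; exact: Hlamc.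
  have a_step : forall k, sqnorm2 (traj f psi x0 k) + a k.+1 <= a k.
    by move=> k; have := step _ _ _ (Hlamc (traj f psi x0 k)) (Hlamc (traj f psi x0 k.+1)); rewrite /a /=; lra.
  have a_decd : forall N d, a (N + d)%N <= a N.
    move=> N; elim=> [|d IH]; first by rewrite addn0.
    rewrite addnS; apply: le_trans IH; have := a_step (N + d)%N; have := sqnorm2_ge0 (traj f psi x0 (N + d)); lra.
  have a_dec : forall N k, (N <= k)%N -> a k <= a N.
    by move=> N k Hk; rewrite -(subnKC Hk); apply: a_decd.
  pose E := range a.
  have Elb : has_lbound E by exists 0 => t [k _ <-].
  have Einf : has_inf E by split => //; exists (a 0%N); exists 0%N.
  apply/cvgrPdist_lt => e e0.
  have [t [N _ <-] HN] := inf_adherent (exprn_gt0 2 e0) Einf.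
  exists N => // k /= Hk.
  rewrite sub0r normrN ger0_norm; last exact: norm2_ge0.
  apply: norm2_lt => //.
  have H1 := a_dec N k Hk; have H2 := a_step k.
  have H3 : inf E <= a k.+1 by apply: ge_inf => //; exists k.+1.
  lra.
have stab : forall c0 : R,
    (forall x lam, feas x (psi x) lam -> c0 <= V (pt_xul x (psi x) lam)) ->
    (forall e, 0 < e -> exists d, 0 < d /\ forall x0, norm2 x0 <= d ->
        exists lam, feas x0 (psi x0) lam /\ V (pt_xul x0 (psi x0) lam) <= c0 + e) ->
    GAS f psi.
  move=> c0 P1 P2; split => // e e0.
  have [d [d0 Hd]] := P2 (e ^+ 2) (exprn_gt0 2 e0).
  exists d; split => // x0 hx0 k.
  have [lam [Hfe HV0]] := Hd x0 hx0.
  apply: norm2_le; first exact: ltW.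
  have := dec x0 lam k (lamc (traj f psi x0 k.+1)) Hfe (Hlamc _).
  have := P1 _ _ (Hlamc (traj f psi x0 k.+1)).
  lra.
split => //.
case=> [[r [r0 [M Hinf]]]|HVb].
{
  pose zr := fun _ : 'I_n => 0 : R.
  pose lamS := lamc zr.
  pose zs := pt_xul zr (psi zr) lamS.
  pose c0 := V zs.
  have bnd : forall x, norm2 x < r -> exists lam, feas x (psi x) lam /\
      norm2 (psi x) < M + 1 /\ norm2 lam < M + 1.
    move=> x hx.
    pose S := [set t : R | exists (u : 'I_m -> R) (lam : 'I_nl -> R),
               (forall i, 0 <= g i (pt_xul x u lam)) /\
               (forall j, h j (pt_xul x u lam) = 0) /\
               t = norm2 u + norm2 lam].
    have HS : `|inf S| <= M := Hinf x hx.
    have HSi : has_inf S.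
      split.
        exists (norm2 (psi x) + norm2 (lamc x)); exists (psi x), (lamc x).
        by have [H1 H2] := Hlamc x; split.
      exists 0 => t [u [lam [_ [_ ->]]]]; apply: addr_ge0; exact: norm2_ge0.
    have [t [u [lam [Hg1 [Hh1 ->]]]] Ht] := inf_adherent ltr01 HSi.
    have Hu : u = psi x by apply: (feas_psi x u lam); split.
    subst u; exists lam; split; first by split.
    have := ler_norm (inf S); have := norm2_ge0 (psi x); have := norm2_ge0 lam.
    move: HS Ht; lra.
  pose B := r + `|M| + 1 + norm2 (psi zr) + norm2 lamS.
  have B0 : 0 <= B.
    have := norm2_ge0 (psi zr); have := norm2_ge0 lamS; have := normr_ge0 M.
    rewrite /B; lra.
  have Kb : forall i, exists K, 0 <= K /\ forall z, (forall v, `|z v| <= B) -> `|p3 i z| <= K.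
    move=> i; have [K [C [K0 [_ [HK _]]]]] := @pf_bound _ _ _ (Hp3 i) _ B0.
    by exists K.
  have [Kf HKf] := choice Kb.
  pose Kt := \sum_(i < n) Kf i.
  have Kt0 : 0 <= Kt by apply: sumr_ge0 => i _; exact: (HKf i).1.
  have sumb : forall xi (d : 'I_n -> R) D, (forall v, `|xi v| <= B) -> (forall i, `|d i| <= D) ->
      `|\sum_(i < n) p3 i xi * d i| <= Kt * D.
    move=> xi d D Hxi Hd; apply: le_trans (ler_norm_sum _ _ _) _.
    rewrite /Kt mulr_suml; apply: ler_sum => i _; rewrite normrM.
    apply: ler_pM => //; first exact: (HKf i).2.
  have bz : forall (x : 'I_n -> R) (u : 'I_m -> R) (lam : 'I_nl -> R), norm2 x < r -> norm2 u < M + 1 -> norm2 lam < M + 1 ->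
      forall w, `|pt_xul x u lam w| <= B.
    move=> x u lam hx hu hl [[i|j]|k] /=;
    have := norm2_ge0 (psi zr); have := norm2_ge0 lamS; have := ler_norm M; have := normr_ge0 M; rewrite /B.
      by have := coord_le_norm2 x i; lra.
      by have := coord_le_norm2 u j; lra.
    by have := coord_le_norm2 lam k; lra.
  have bs : forall w, `|zs w| <= B.
    case=> [[i|j]|k] /=;
    have := norm2_ge0 (psi zr); have := norm2_ge0 lamS; have := normr_ge0 M; rewrite /B.
        by rewrite /zr normr0; lra.
      by have := coord_le_norm2 (psi zr) j; lra.
    by have := coord_le_norm2 lamS k; lra.
  have bxi1 : forall (x : 'I_n -> R) (u : 'I_m -> R) (lam : 'I_nl -> R), norm2 x < r -> norm2 u < M + 1 -> norm2 lam < M + 1 ->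
      forall v, `|pt_xi (pt_xul x u lam) zs v| <= B.
    by move=> x u lam hx hu hl [w|w] /=; [exact: bz|exact: bs].
  have bxi2 : forall (x : 'I_n -> R) (u : 'I_m -> R) (lam : 'I_nl -> R), norm2 x < r -> norm2 u < M + 1 -> norm2 lam < M + 1 ->
      forall v, `|pt_xi zs (pt_xul x u lam) v| <= B.
    by move=> x u lam hx hu hl [w|w] /=; [exact: bs|exact: bz].
  have P1 : forall x lam, feas x (psi x) lam -> c0 <= V (pt_xul x (psi x) lam).
    move=> y lam Hy; rewrite leNgt; apply/negP => Hlt.
    pose e := c0 - V (pt_xul y (psi y) lam).
    have e0 : 0 < e by rewrite /e subr_gt0.
    pose t := Num.min r (e / (Kt + 1)).
    have Kt1 : 0 < Kt + 1 by lra.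
    have t0 : 0 < t by rewrite /t lt_min r0 divr_gt0.
    have t1 : t <= r by rewrite /t ge_min lexx.
    have t2 : (Kt + 1) * t <= e.
      by rewrite mulrC -ler_pdivlMr // /t ge_min lexx orbT.
    have := attr y; move/cvgrPdist_lt => /(_ t t0) [N _ HN].
    have hx1 := HN N.+1 (leqnSn N).
    have hx2 := HN N.+2 (leqW (leqnSn N)).
    rewrite sub0r normrN ger0_norm in hx1; last exact: norm2_ge0.
    rewrite sub0r normrN ger0_norm in hx2; last exact: norm2_ge0.
    set x1 := traj f psi y N.+1 in hx1.
    have [lam' [Hf' [Hu' Hl']]] := bnd x1 (lt_le_trans hx1 t1).
    have Hd := dec y lam N lam' Hy Hf'.
    have Hk := key x1 (psi x1) lam' zr (psi zr) lamS Hf' (Hlamc zr).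
    have Hs := sumb _ (fun i => zr i - f i (pt_xu x1 (psi x1))) (norm2 (traj f psi y N.+2))
       (bxi1 _ _ _ (lt_le_trans hx1 t1) Hu' Hl').
    have Hs' : `|\sum_(i < n) p3 i (pt_xi (pt_xul x1 (psi x1) lam') zs) *
                 (zr i - f i (pt_xu x1 (psi x1)))| <= Kt * norm2 (traj f psi y N.+2).
      apply: Hs => i; rewrite /zr sub0r normrN.
      exact: (coord_le_norm2 (traj f psi y N.+2) i).
    move: Hs'; rewrite ler_norml => /andP [L1 _].
    have := sqnorm2_ge0 (traj f psi y N).
    have := sqnorm2_ge0 x1.
    have := norm2_ge0 (traj f psi y N.+2).
    move: Hk Hd; rewrite -/x1 -/zs -/c0.
    move: e0 t2 Kt0 t0 hx2; rewrite /e; nra.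
  have f0 : forall i, f i (pt_xu zr (psi zr)) = 0.
    have H1 := dec zr lamS 1 (lamc (traj f psi zr 2)) (Hlamc zr) (Hlamc _).
    have H2 := P1 _ _ (Hlamc (traj f psi zr 2)).
    have H3 : sqnorm2 (traj f psi zr 1) <= 0.
      move: H1 H2; rewrite -/zs -/c0; lra.
    move=> i; exact: (@sqnorm2_le0 _ _ _ i H3).
  apply: (stab c0) => // e e0.
  pose t := Num.min (r / 2) (e / (Kt + 1)).
  have Kt1 : 0 < Kt + 1 by lra.
  have t0 : 0 < t by rewrite /t lt_min; apply/andP; split; apply: divr_gt0; lra.
  have t1 : t < r.
    apply: le_lt_trans (_ : r / 2 < r); first by rewrite /t ge_min lexx.
    lra.
  have t2 : (Kt + 1) * t <= e.
    by rewrite mulrC -ler_pdivlMr // /t ge_min lexx orbT.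
  exists t; split => // x0 hx0.
  have [lam0 [Hf0 [Hu0 Hl0]]] := bnd x0 (le_lt_trans hx0 t1).
  exists lam0; split => //.
  have Hk := key zr (psi zr) lamS x0 (psi x0) lam0 (Hlamc zr) Hf0.
  have sq0 : sqnorm2 zr = 0 by rewrite /sqnorm2 big1 // => i _; rewrite /zr expr0n.
  have Hs' : `|\sum_(i < n) p3 i (pt_xi zs (pt_xul x0 (psi x0) lam0)) *
                 (x0 i - f i (pt_xu zr (psi zr)))| <= Kt * norm2 x0.
    apply: (sumb _ (fun i => x0 i - f i (pt_xu zr (psi zr)))).
      exact: (bxi2 _ _ _ (le_lt_trans hx0 t1) Hu0 Hl0).
    by move=> i; rewrite f0 subr0; exact: coord_le_norm2.
  move: Hs'; rewrite ler_norml => /andP [L1 _].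
  move: Hk; rewrite -/zs -/c0 sq0.
  have := norm2_ge0 x0.
  move: t2 Kt0 t0 hx0; nra.
}
pose z0v (x : 'I_n -> R) := pt_xul x (fun _ : 'I_m => 0 : R) (fun _ : 'I_nl => 0 : R).
pose c0 := V (z0v (fun _ => 0)).
have [K [C [K0 [C0 [_ HC]]]]] := @pf_bound _ _ _ HV _ ler01.
have Lip : forall x, norm2 x <= 1 -> `|V (z0v x) - c0| <= C * norm2 x.
  move=> x hx; apply: HC.
  - case=> [[i|j]|k] /=; [exact: le_trans (coord_le_norm2 x i) hx|by rewrite normr0|by rewrite normr0].
  - by case=> [[i|j]|k] /=; rewrite normr0.
  - case=> [[i|j]|k] /=; rewrite ?subr0 ?subrr ?normr0; [exact: coord_le_norm2|exact: norm2_ge0|exact: norm2_ge0].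
have VV : forall x lam, V (pt_xul x (psi x) lam) = V (z0v x) by move=> x lam; apply: HVb.
have C1 : 0 < C + 1 by lra.
apply: (stab c0).
  move=> y lam Hy; rewrite leNgt; apply/negP => Hlt.
  pose e := c0 - V (pt_xul y (psi y) lam).
  have e0 : 0 < e by rewrite /e subr_gt0.
  pose t := Num.min 1 (e / (C + 1)).
  have t0 : 0 < t by rewrite /t lt_min ltr01 divr_gt0.
  have t1 : t <= 1 by rewrite /t ge_min lexx.
  have t2 : (C + 1) * t <= e.
    by rewrite mulrC -ler_pdivlMr // /t ge_min lexx orbT.
  have := attr y; move/cvgrPdist_lt => /(_ t t0) [N _ HN].
  have := HN N.+1 (leqnSn N); rewrite sub0r normrN ger0_norm; last exact: norm2_ge0.
  move=> Hx.
  have := dec y lam N (lamc (traj f psi y N.+1)) Hy (Hlamc _).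
  rewrite VV.
  have := Lip (traj f psi y N.+1) (ltW (lt_le_trans Hx t1)).
  rewrite ler_norml => /andP [L1 _].
  have := sqnorm2_ge0 (traj f psi y N).
  have := norm2_ge0 (traj f psi y N.+1).
  move: e0 t2; rewrite /e; nra.
move=> e e0.
pose t := Num.min 1 (e / (C + 1)).
have t0 : 0 < t by rewrite /t lt_min ltr01 divr_gt0.
have t1 : t <= 1 by rewrite /t ge_min lexx.
have t2 : (C + 1) * t <= e.
  by rewrite mulrC -ler_pdivlMr // /t ge_min lexx orbT.
exists t; split => // x0 hx0; exists (lamc x0); split; first exact: Hlamc.
rewrite VV.
have := Lip x0 (le_trans hx0 t1).
rewrite ler_norml => /andP [_ L1].
have := norm2_ge0 x0.
move: t2; nra.
Qed.
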